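(* Let $\mathcal H$ be a real Hilbert space and $p\ge 2$. Let $J:\mathcal H\to\mathbb R\cup\{\infty\}$ be convex, lower semicontinuous, proper, with dense effective domain, and absolutely $p$-homogeneous ($J(cu)=|c|^pJ(u)$ for all $c\neq0$, $u\in\mathcal H$, and $J(0)=0$), and assume $\lambda_1:=\inf_{u\in\mathcal H_0}\frac{pJ(u)}{\|u\|^p}>0$. Let $f\in\mathcal H_0$ and let $u$ be the solution of the gradient flow $\partial_t u+\partial J(u)\ni 0$, $u(0)=f$. Then the extinction time satisfies $T_{\mathrm{ex}}=\infty$.
   Context: $\langle\cdot,\cdot\rangle$ and $\|\cdot\|$ denote the inner product and norm of $\mathcal H$. The subdifferential is $\partial J(u)=\{\zeta\in\mathcal H: J(u)+\langle\zeta,v-u\rangle\le J(v)\ \forall v\in\mathcal H\}$. $\mathcal N(J)=\{u\in\mathcal H:J(u)=0\}$ is the null-space of $J$ (a closed linear subspace) and $\mathcal H_0:=\mathcal N(J)^\perp\setminus\{0\}$. The gradient flow is understood in Brezis' sense: the unique continuous $u:[0,\infty)\to\mathcal H$, Lipschitz on $[\delta,\infty)$ for every $\delta>0$, right-differentiable on $(0,\infty)$ with $u(0)=f$ and right derivative $\partial_t^+u(t)=-\zeta(t)$, where $\zeta(t)$ is the element of minimal norm of the closed convex set $\partial J(u(t))$. The extinction time is $T_{\mathrm{ex}}:=\inf\{T>0: u(t)=0\ \forall t\ge T\}\in(0,\infty]$. *)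

(* Defs.v *)
From HB Require Import structures.
From mathcomp Require Import all_boot all_order all_algebra.
From mathcomp Require Import all_classical all_reals all_analysis.
Set Implicit Arguments. Unset Strict Implicit. Unset Printing Implicit Defensive.
Import Order.TTheory GRing.Theory Num.Theory.
Import numFieldNormedType.Exports.
Local Open Scope classical_set_scope.
Local Open Scope ring_scope.

Section Defs.
Context {R : realType} {V : normedModType R}.

(* [ip] is a real inner product inducing the norm of V (so a complete V
   with such an [ip] is a real Hilbert space). *)
Definition is_inner_product (ip : V -> V -> R) : Prop :=
  [/\ forall x y, ip x y = ip y x,
      forall a x y z, ip (a *: x + y) z = a * ip x z + ip y z &
      forall x, ip x x = `|x| ^+ 2].

Local Open Scope ereal_scope.

Definition convex_fun (J : V -> \bar R) : Prop :=
  forall (u v : V) (t : R), (0 <= t <= 1)%R ->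
    J (t *: u + (1 - t) *: v)%R <= t%:E * J u + (1 - t)%:E * J v.

Definition proper_fun (J : V -> \bar R) : Prop :=
  (forall u, J u != -oo) /\ (exists u, J u != +oo).

Definition eff_dom (J : V -> \bar R) : set V := [set u | J u < +oo].

Definition dense_eff_dom (J : V -> \bar R) : Prop := closure (eff_dom J) = setT.

Definition abs_homogeneous (p : R) (J : V -> \bar R) : Prop :=
  (forall (c : R) (u : V), c != 0%R -> J (c *: u)%R = (`|c| `^ p)%:E * J u)
  /\ J (0%R : V) = 0.

Definition null_space (J : V -> \bar R) : set V := [set u | J u = 0].

Definition H0 (ip : V -> V -> R) (J : V -> \bar R) : set V :=
  [set v | (forall w, null_space J w -> ip v w = 0%R) /\ v != (0%R : V)].

Definition lambda1 (ip : V -> V -> R) (p : R) (J : V -> \bar R) : \bar R :=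
  ereal_inf [set (p / (`|u| `^ p))%:E * J u | u in H0 ip J].

Definition subdiff (ip : V -> V -> R) (J : V -> \bar R) (u : V) : set V :=
  [set z | forall v, J u + (ip z (v - u)%R)%:E <= J v].

Definition min_norm_subgrad (ip : V -> V -> R) (J : V -> \bar R) (u z : V) : Prop :=
  subdiff ip J u z /\ (forall w, subdiff ip J u w -> (`|z| <= `|w|)%R).

Local Close Scope ereal_scope.

(* Brezis solution of the gradient flow  u' + dJ(u) \ni 0, u(0) = f *)
Definition gradient_flow (ip : V -> V -> R) (J : V -> \bar R) (f : V)
    (u : R -> V) : Prop :=
  [/\ u 0 = f,
      {within [set t : R | 0 <= t], continuous u},
      (forall delta : R, 0 < delta -> exists L : R,
          forall s t, delta <= s -> delta <= t -> `|u s - u t| <= L * `|s - t|) &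
      (forall t : R, 0 < t -> exists z : V,
          min_norm_subgrad ip J (u t) z /\
          h^-1 *: (u (t + h) - u t) @[h --> 0^'+] --> - z)].

Definition extinction_time (u : R -> V) : \bar R :=
  ereal_inf [set T%:E | T in [set T : R | 0 < T /\ forall t, T <= t -> u t = 0]].

End Defs.

(* Main.v *)
Require Import Defs.
From HB Require Import structures.
From mathcomp Require Import all_boot all_order all_algebra.
From mathcomp Require Import all_classical all_reals all_analysis.
From mathcomp Require Import ring lra.
Import Order.TTheory GRing.Theory Num.Theory.
Import numFieldNormedType.Exports.
Local Open Scope classical_set_scope.
Local Open Scope ring_scope.
Section Gen.
Context {R : realType}.

Lemma near_right_ex (P : R -> Prop) :
  (\forall h \near 0^'+, P h) -> forall h0 : R, 0 < h0 -> exists h, 0 < h < h0 /\ P h.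
Proof.
move=> HP h0 h00.
have : \forall h \near (0:R)^'+, (0 < h < h0) /\ P h.
  near=> h; split; last by near: h.
  apply/andP; split; [near: h; exact: nbhs_right_gt| near: h; exact: nbhs_right_lt].
move=> /filter_ex [h Hh]; by exists h.
Unshelve. all: by end_near. Qed.

Lemma near_ball_ex (x : R) (P : R -> Prop) :
  (\forall y \near x, P y) -> exists2 r : R, 0 < r & forall y, `|x - y| < r -> P y.
Proof.
move=> /nbhs_ballP [r r0 Hr]; exists r => // y xy; exact: Hr.
Qed.

Lemma near_right_rad (P : R -> Prop) :
  (\forall h \near 0^'+, P h) -> exists2 r : R, 0 < r & forall h, 0 < h < r -> P h.
Proof.
move=> HP; have := HP; rewrite near_withinE => /near_ball_ex [r r0 Hr].
exists r => // h /andP[h0 hr]; apply: Hr => //.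
by rewrite sub0r normrN gtr0_norm.
Qed.

Lemma dini (a b : R) (phi : R -> R) : a <= b ->
  (forall x, a <= x <= b -> {for x, continuous phi}) ->
  (forall x, a <= x < b -> forall eps, 0 < eps -> forall h0, 0 < h0 ->
      exists h, 0 < h < h0 /\ phi (x + h) <= phi x + eps * h) ->
  phi b <= phi a.
Proof.
move=> ab hc hd; rewrite leNgt; apply/negP => hba.
have ab' : a < b.
  rewrite lt_neqAle ab andbT; apply/negP => /eqP eab.
  by move: hba; rewrite eab ltxx.
pose eps := (phi b - phi a) / (2 * (b - a)).
have eps0 : 0 < eps.
  by apply: divr_gt0; [rewrite subr_gt0|apply: mulr_gt0 => //; rewrite subr_gt0].
pose psi x := phi x - phi a - eps * (x - a).
pose S := [set x | a <= x <= b /\ psi x <= 0].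
have Sa : S a by split; [rewrite lexx ab | rewrite /psi !subrr mulr0 subrr].
have hS : has_sup S.
  split; first by exists a.
  by exists b => x [/andP[_ ->]].
pose c := sup S.
have ac : a <= c by apply: sup_upper_bound.
have cb : c <= b.
  apply: sup_le_ub; first by exists a.
  by move=> x [/andP[_ ->]].
have psib : 0 < psi b.
  have e1 : eps * (b - a) = (phi b - phi a) / 2.
    rewrite /eps; field; rewrite subr_eq0 gt_eqF //.
  rewrite /psi -addrA -opprD addrC e1.
  have : 0 < phi b - phi a by rewrite subr_gt0.
  lra.
have psic : psi c <= 0.
  rewrite leNgt; apply/negP => pc.
  have cpsi : {for c, continuous psi}.
    apply: cvgB; first apply: cvgB.
    - by apply: hc; rewrite ac cb.
    - exact: cvg_cst.
    apply: cvgM; first exact: cvg_cst.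
    by apply: cvgB; [exact: cvg_id | exact: cvg_cst].
  have : \forall y \near c, 0 < psi y by apply: cvgr_gt cpsi _ pc.
  move=> /near_ball_ex [r r0 Hr].
  have [s Ss cs] := sup_adherent r0 hS.
  have sc : s <= c by apply: sup_upper_bound.
  have : 0 < psi s.
    apply: Hr; rewrite ger0_norm ?subr_ge0 //.
    by rewrite ltrBlDr addrC -ltrBlDr.
  by case: Ss => _; lra.
have cb' : c < b.
  rewrite lt_neqAle cb andbT; apply/negP => /eqP ecb.
  by move: psic; rewrite ecb leNgt psib.
have bc0 : 0 < b - c by rewrite subr_gt0.
have acb : a <= c < b by rewrite ac cb'.
have [h [/andP[h0 hbc] Hh]] := hd c acb eps eps0 (b - c) bc0.
have Sch : S (c + h).
  split.
    apply/andP; split; first by apply: le_trans ac _; rewrite lerDl ltW.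
    by apply: ltW; rewrite -ltrBrDl.
  apply: le_trans psic; rewrite /psi.
  move: Hh; lra.
have := sup_upper_bound hS Sch; rewrite -/c.
move: h0; lra.
Qed.
Lemma le_cont_right (phi : R -> R) (tau k v : R) : {for tau, continuous phi} -> 0 < k ->
  (forall s, 0 < s < k -> v <= phi (tau + s)) -> v <= phi tau.
Proof.
move=> hc k0 hs; rewrite leNgt; apply/negP => hlt.
have : \forall y \near tau, phi y < v by apply: cvgr_lt hc _ hlt.
move=> /near_ball_ex [r r0 Hr].
pose s := Num.min r k / 2.
have s0 : 0 < s by rewrite /s divr_gt0 // lt_min r0 k0.
have sr : s < Num.min r k by rewrite /s ltr_pdivrMr // mulr_natr mulr2n ltrDl lt_min r0 k0.
move: sr; rewrite lt_min => /andP[sr sk].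
have := hs s; rewrite s0 sk => /(_ isT).
have : phi (tau + s) < v.
  apply: Hr; rewrite opprD addrA subrr sub0r normrN gtr0_norm //.
lra.
Qed.
Lemma ball_near (x r : R) : 0 < r -> \forall y \near x, `|x - y| < r.
Proof. by move=> r0; apply/nbhs_ballP; exists r. Qed.

Lemma cvg_near_eq {T : Type} {F : set_system T} {FF : Filter F} {V : topologicalType}
  {f g : T -> V} {l : V} : {near F, f =1 g} -> f @ F --> l -> g @ F --> l.
Proof. by move=> e fl; apply: cvg_trans (near_eq_cvg e) fl. Qed.

Lemma cvg_le_right {f : R -> R} {l b : R} : f h @[h --> 0^'+] --> l ->
  (forall h, 0 < h -> f h <= b) -> l <= b.
Proof.
move=> fl hb; rewrite leNgt; apply/negP => bl.
have [h [/andP[h0 _] hh]] := near_right_ex _ (cvgr_gt _ fl _ bl) _ ltr01.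
by have := hb h h0; rewrite leNgt hh.
Qed.

Lemma lt_frac (L eps : R) : 0 <= L -> 0 < eps -> L * (eps / (L + 1)) < eps.
Proof.
move=> L0 e0; have L1 : 0 < L + 1 by rewrite ltr_wpDl.
rewrite mulrA ltr_pdivrMr // [eps * _]mulrC ltr_pM2r //; lra.
Qed.

Lemma mulinv_lt (h X b : R) : 0 < h -> h^-1 * X < b -> X < b * h.
Proof.
move=> h0 hq; have : h * (h^-1 * X) < h * b by rewrite ltr_pM2l.
by rewrite mulrA mulrV ?unitfE ?lt0r_neq0 // mul1r mulrC.
Qed.

Lemma mulinv_gt (h X b : R) : 0 < h -> b < h^-1 * X -> b * h < X.
Proof.
move=> h0 hq; have : h * b < h * (h^-1 * X) by rewrite ltr_pM2l.
by rewrite mulrA mulrV ?unitfE ?lt0r_neq0 // mul1r mulrC.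
Qed.
End Gen.
Section Main.
Context {R : realType} {H : normedModType R} (ip : H -> H -> R) (p : R)
  (J : H -> \bar R) (u : R -> H).
Hypotheses (hip : is_inner_product ip) (hp : 2 <= p) (hconv : convex_fun J)
  (hprop : proper_fun J) (hhom : abs_homogeneous p J).
Hypothesis hder : forall t, 0 < t -> exists z, subdiff ip J (u t) z /\
  h^-1 *: (u (t + h) - u t) @[h --> 0^'+] --> - z.
Variables (d L : R).
Hypotheses (hd : 0 < d)
  (hL : forall s t, d <= s -> d <= t -> `|u s - u t| <= L * `|s - t|).

Lemma ipC x y : ip x y = ip y x.
Proof. by case: hip. Qed.

Lemma ipxx x : ip x x = `|x| ^+ 2.
Proof. by case: hip. Qed.

Lemma ip_lin a x y z : ip (a *: x + y) z = a * ip x z + ip y z.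
Proof. by case: hip. Qed.

Lemma ipDl x y z : ip (x + y) z = ip x z + ip y z.
Proof. by rewrite -[x in LHS]scale1r ip_lin mul1r. Qed.

Lemma ip0l z : ip 0 z = 0.
Proof.
have := ipDl 0 0 z; rewrite addr0 => /eqP; rewrite -subr_eq0 => /eqP.
by move=> h; have : ip 0 z = 0 by lra.
Qed.

Lemma ipZl a x z : ip (a *: x) z = a * ip x z.
Proof. by rewrite -[a *: x]addr0 ip_lin ip0l addr0. Qed.

Lemma ipNl x z : ip (- x) z = - ip x z.
Proof. by rewrite -scaleN1r ipZl mulN1r. Qed.

Lemma ipBl x y z : ip (x - y) z = ip x z - ip y z.
Proof. by rewrite ipDl ipNl. Qed.

Lemma ipDr x y z : ip z (x + y) = ip z x + ip z y.
Proof. by rewrite ipC ipDl ![ip _ z]ipC. Qed.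

Lemma ipZr a x z : ip z (a *: x) = a * ip z x.
Proof. by rewrite ipC ipZl ipC. Qed.

Lemma ipNr x z : ip z (- x) = - ip z x.
Proof. by rewrite ipC ipNl ipC. Qed.

Lemma ipBr x y z : ip z (x - y) = ip z x - ip z y.
Proof. by rewrite ipDr ipNr. Qed.

Lemma ip_polar x y : ip x y = (`|x + y| ^+ 2 - `|x| ^+ 2 - `|y| ^+ 2) / 2.
Proof.
rewrite -!ipxx ipDl !ipDr (ipC y x); field.
by [].
Qed.

Lemma ip_le x y : ip x y <= `|x| * `|y|.
Proof.
rewrite ip_polar.
have h1 : `|x + y| <= `|x| + `|y| by apply: ler_normD.
have h2 : `|x + y| ^+ 2 <= (`|x| + `|y|) ^+ 2.
  by rewrite ler_sqr ?nnegrE ?addr_ge0.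
move: h2; set a := `|x|; set b := `|y|; set c := `|x+y| ^+ 2.
move=> h2; rewrite ler_pdivrMr //; move: h2; rewrite !expr2; lra.
Qed.

Lemma ip_le_abs x y : `|ip x y| <= `|x| * `|y|.
Proof.
rewrite ler_norml ip_le andbT.
by rewrite lerNl -ipNl -(normrN x) ip_le.
Qed.

Lemma ip_cvg {T : Type} {F : set_system T} {FF : Filter F} (f g : T -> H) a b :
  f @ F --> a -> g @ F --> b -> (fun t => ip (f t) (g t)) @ F --> ip a b.
Proof.
move=> fa gb.
have -> : (fun t => ip (f t) (g t)) =
  (fun t => (`|f t + g t| * `|f t + g t| - `|f t| * `|f t| - `|g t| * `|g t|) / 2).
  by apply/funext => t; rewrite ip_polar !expr2.
rewrite ip_polar !expr2.
apply: cvgM; last exact: cvg_cst.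
apply: cvgB; first apply: cvgB.
- by apply: cvgM; apply: cvg_norm; apply: cvgD.
- by apply: cvgM; apply: cvg_norm.
- by apply: cvgM; apply: cvg_norm.
Qed.

Lemma J_hom {c x y} : c != 0 -> J x = y%:E -> J (c *: x) = ((`|c| `^ p) * y)%:E.
Proof. by move=> c0 Jx; rewrite hhom.1 // Jx. Qed.

Lemma J_neg x : J (- x) = J x.
Proof.
rewrite -scaleN1r hhom.1 ?oppr_eq0 ?oner_eq0 // normrN normr1 powR1 mul1e //.
Qed.

Lemma J_ge0 {x y} : J x = y%:E -> 0 <= y.
Proof.
move=> Jx.
have h := hconv x (- x) (2^-1).
have t01 : (0 <= (2^-1 : R) <= 1).
  by apply/andP; split; [rewrite invr_ge0 | rewrite invf_le1 // ler1n].
have : ((2^-1 : R) *: x + (1 - 2^-1) *: - x = 0).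
  have -> : (1 - 2^-1 : R) = 2^-1 by field.
  by rewrite scalerN subrr.
move: (h t01) => + e0; rewrite e0 hhom.2 J_neg Jx -!EFinM -EFinD lee_fin.
have -> : (1 - 2^-1 : R) = 2^-1 by field.
lra.
Qed.

Lemma subdiff_fin {x z} : subdiff ip J x z -> exists y, J x = y%:E.
Proof.
move=> hz; case: hprop => hN [v Jv].
have hv := hz v.
move: (hN x) hv Jv; case: (J x) => [y _ _ _| _ | ] //=; first by exists y.
by case: (J v).
Qed.

Lemma subgrad_real {x z v y w} : subdiff ip J x z -> J x = y%:E -> J v = w%:E ->
  y + ip z (v - x) <= w.
Proof. by move=> hz Jx Jv; have := hz v; rewrite Jx Jv -EFinD lee_fin. Qed.

Lemma P_upper {x z y} : subdiff ip J x z -> J x = y%:E -> ip z x <= (2 `^ p - 1) * y.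
Proof.
move=> hz Jx.
have n2 : (2 : R) != 0 by [].
have J2 := J_hom n2 Jx.
have := subgrad_real hz Jx J2.
have -> : (2 : R) *: x - x = x by rewrite scalerDl scale1r addrK.
rewrite ger0_norm //; lra.
Qed.

Lemma P_lower {x z y} : subdiff ip J x z -> J x = y%:E -> 2 * y <= ip z x.
Proof.
move=> hz Jx.
have y0 := J_ge0 Jx.
have key c : 0 < c < 1 -> (1 + c) * y <= ip z x.
  move=> /andP[c0 c1].
  have Jc := J_hom (lt0r_neq0 c0) Jx.
  have := subgrad_real hz Jx Jc.
  have -> : c *: x - x = (c - 1) *: x by rewrite scalerBl scale1r.
  rewrite ipZr (ger0_norm (ltW c0)).
  have hc2 : c `^ p <= c ^+ 2.
    rewrite -powR_mulrn; last exact: ltW.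
    have ca : 0 < c <= 1 by rewrite c0 ltW.
    exact: (ger_powR ca hp).
  have c2 : c ^+ 2 = c * c by rewrite expr2.
  move=> h.
  have h2 : (1 - c) * ((1 + c) * y) <= (1 - c) * ip z x.
    rewrite c2 in hc2.
    have : c `^ p * y <= c * c * y by rewrite ler_wpM2r.
    move: h; nra.
  by rewrite ler_pM2l // in h2; rewrite subr_gt0.
rewrite leNgt; apply/negP => hlt.
have h2 : (0 < (2^-1 : R) < 1).
  by apply/andP; split; [rewrite invr_gt0| rewrite invf_lt1 // ltr1n].
have hy : 0 < y.
  have := key (2^-1) h2.
  move: hlt; lra.
have k2 := key (2^-1) h2.
pose c := 1 - (2 * y - ip z x) / (4 * y).
have hc : 0 < c < 1.
  apply/andP; split.
    rewrite /c subr_gt0 ltr_pdivrMr ?mulr_gt0 //; move: k2; lra.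
  rewrite /c ltrBlDr ltrDl divr_gt0 ?mulr_gt0 //; move: hlt; lra.
have := key c hc.
rewrite /c.
have e : (1 + (1 - (2 * y - ip z x) / (4 * y))) * y = 2 * y - (2 * y - ip z x) / 4.
  by field; rewrite gt_eqF.
rewrite e; move: hlt; lra.
Qed.

Definition zeta t := xget 0 [set z | subdiff ip J (u t) z /\
  h^-1 *: (u (t + h) - u t) @[h --> 0^'+] --> - z].

Lemma zetaP {t} : 0 < t -> subdiff ip J (u t) (zeta t) /\
  h^-1 *: (u (t + h) - u t) @[h --> 0^'+] --> - zeta t.
Proof.
move=> t0; rewrite /zeta; case: xgetP => // hn.
by have [z hz] := hder t t0; have := hn z.
Qed.

Definition en t := fine (J (u t)).
Definition gn t := `|u t| ^+ 2.
Definition wq t h := h^-1 *: (u (t + h) - u t).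

Lemma Jen {t} : 0 < t -> J (u t) = (en t)%:E.
Proof.
move=> t0; have [y Jy] := subdiff_fin (zetaP t0).1.
by rewrite /en Jy.
Qed.

Lemma en_ge0 {t} : 0 < t -> 0 <= en t.
Proof. by move=> t0; apply: (J_ge0 (Jen t0)). Qed.

Lemma L0 : 0 <= L.
Proof.
have h1 : d <= d + 1 by rewrite lerDl.
have := hL d (d + 1) (lexx d) h1.
rewrite opprD addrA subrr sub0r normrN normr1 mulr1.
by apply: le_trans.
Qed.

Lemma zeta_bound {t} : d <= t -> `|zeta t| <= L.
Proof.
move=> dt; have t0 : 0 < t := lt_le_trans hd dt.
have hn : `|h^-1 *: (u (t + h) - u t)| @[h --> 0^'+] --> `|- zeta t|.
  by apply: cvg_norm; exact: (zetaP t0).2.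
rewrite -normrN; apply: (cvg_le_right hn) => h h0.
rewrite normrZ gtr0_norm ?invr_gt0 //.
have dth : d <= t + h by apply: le_trans dt _; rewrite lerDl ltW.
have := hL (t + h) t dth dt.
rewrite addrAC subrr add0r (gtr0_norm h0) => hh.
have hi : 0 <= h^-1 by rewrite invr_ge0 ltW.
have := ler_wpM2l hi hh.
by rewrite (mulrC L) mulrA mulVf ?lt0r_neq0 // mul1r.
Qed.

Lemma u_cont {x} : d < x -> {for x, continuous u}.
Proof.
move=> dx; apply/cvgrPdist_lt => eps eps0.
have L1 : 0 < L + 1 by rewrite ltr_wpDl // L0.
have r0 : 0 < Num.min (x - d) (eps / (L + 1)).
  by rewrite lt_min subr_gt0 dx divr_gt0.
near=> y.
have hy : `|x - y| < Num.min (x - d) (eps / (L + 1)) by near: y; exact: ball_near.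
move: hy; rewrite lt_min => /andP[h1 h2].
have dy : d <= y.
  move: h1; rewrite ltr_norml => /andP[_ h1]; move: h1; lra.
apply: le_lt_trans (hL x y (ltW dx) dy) _.
have : L * `|x - y| <= L * (eps / (L + 1)) by rewrite ler_wpM2l ?L0 // ltW.
move=> h3; apply: le_lt_trans h3 _.
exact: lt_frac L0 eps0.
Unshelve. all: by end_near.
Qed.

Lemma en_lip1 {s t} : d <= s -> d <= t -> en s - en t <= L * `|u s - u t|.
Proof.
move=> ds dt; have s0 : 0 < s := lt_le_trans hd ds.
have t0 : 0 < t := lt_le_trans hd dt.
have h := subgrad_real (zetaP s0).1 (Jen s0) (Jen t0).
have h2 := ip_le (zeta s) (u s - u t).
have h3 : `|zeta s| * `|u s - u t| <= L * `|u s - u t|.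
  by rewrite ler_wpM2r // zeta_bound.
move: h h2 h3; rewrite !ipBr; lra.
Qed.

Lemma en_lip {s t} : d <= s -> d <= t -> `|en s - en t| <= L * `|u s - u t|.
Proof.
move=> ds dt; rewrite ler_norml en_lip1 // andbT.
have := en_lip1 dt ds; rewrite distrC; lra.
Qed.

Lemma en_cont {x} : d < x -> {for x, continuous en}.
Proof.
move=> dx; apply/cvgrPdist_lt => eps eps0.
have L1 : 0 < L + 1 by rewrite ltr_wpDl // L0.
have hu := (cvgrPdist_lt _ _).1 (u_cont dx) (eps / (L + 1)) (divr_gt0 eps0 L1).
near=> y.
have h1 : `|u x - u y| < eps / (L + 1) by near: y; exact: hu.
have h2 : `|x - y| < x - d by near: y; apply: ball_near; rewrite subr_gt0.
have dy : d <= y.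
  move: h2; rewrite ltr_norml => /andP[_ h2]; move: h2; lra.
apply: le_lt_trans (en_lip (ltW dx) dy) _.
have : L * `|u x - u y| <= L * (eps / (L + 1)) by rewrite ler_wpM2l ?L0 // ltW.
move=> h3; apply: le_lt_trans h3 _.
exact: lt_frac L0 eps0.
Unshelve. all: by end_near.
Qed.

Lemma gn_cont {x} : d < x -> {for x, continuous gn}.
Proof.
move=> dx; rewrite /gn.
have -> : (fun t => `|u t| ^+ 2) = (fun t => `|u t| * `|u t|).
  by apply/funext => t; rewrite expr2.
by apply: cvgM; apply: cvg_norm; apply: u_cont.
Qed.

Lemma uR {t} : 0 < t -> u (t + h) @[h --> 0^'+] --> u t.
Proof.
move=> t0.
have hid : (h : R) @[h --> 0^'+] --> (0 : R).
  by apply: cvg_at_right_filter; exact: cvg_id.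
have h1 : h *: wq t h @[h --> 0^'+] --> 0.
  rewrite -(scale0r (- zeta t)); apply: cvgZ => //; exact: (zetaP t0).2.
have h2 : u t + h *: wq t h @[h --> 0^'+] --> u t + 0.
  by apply: cvgD => //; exact: cvg_cst.
rewrite addr0 in h2.
apply: (cvg_near_eq _ h2); near=> h.
have h0 : h != 0 by apply: lt0r_neq0; near: h; exact: nbhs_right_gt.
by rewrite /wq scalerA mulrV ?unitfE // scale1r addrC subrK.
Unshelve. all: by end_near.
Qed.

Lemma gn_der {t} : 0 < t ->
  h^-1 * (gn (t + h) - gn t) @[h --> 0^'+] --> - (2 * ip (zeta t) (u t)).
Proof.
move=> t0.
have hc : ip (wq t h) (u (t + h) + u t) @[h --> 0^'+] --> ip (- zeta t) (u t + u t).
  apply: ip_cvg; first exact: (zetaP t0).2.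
  by apply: cvgD; [exact: uR | exact: cvg_cst].
have -> : - (2 * ip (zeta t) (u t)) = ip (- zeta t) (u t + u t).
  by rewrite ipNl ipDr; ring.
apply: (cvg_near_eq _ hc); near=> h.
rewrite /gn -!ipxx /wq ipZl ipBl !ipDr (ipC (u t) (u (t + h))); ring.
Unshelve. all: by end_near.
Qed.

Lemma en_up {t h} : d <= t -> 0 < h ->
  en (t + h) - en t <= h * ip (zeta (t + h)) (wq t h).
Proof.
move=> dt h0; have t0 : 0 < t := lt_le_trans hd dt.
have s0 : 0 < t + h by rewrite addr_gt0.
have := subgrad_real (zetaP s0).1 (Jen s0) (Jen t0).
rewrite /wq -ipZr scalerA mulrV ?unitfE ?lt0r_neq0 // scale1r !ipBr; lra.
Qed.

Lemma P_bounds {t} : 0 < t ->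
  2 * en t <= ip (zeta t) (u t) /\ ip (zeta t) (u t) <= (2 `^ p - 1) * en t.
Proof.
move=> t0; split; [exact: P_lower (zetaP t0).1 (Jen t0) | exact: P_upper (zetaP t0).1 (Jen t0)].
Qed.

Lemma limsup {tau} : d < tau -> forall eta, 0 < eta -> forall h0, 0 < h0 ->
  exists h, 0 < h < h0 /\ `|zeta tau| ^+ 2 - eta <= ip (zeta (tau + h)) (zeta tau).
Proof.
move=> dtau eta eta0 h0 h00.
have tau0 : 0 < tau := lt_trans hd dtau.
apply: contrapT => hn.
have hlt : forall h, 0 < h < h0 ->
    ip (zeta (tau + h)) (zeta tau) < `|zeta tau| ^+ 2 - eta.
  move=> h hh; rewrite ltNge; apply/negP => hge; apply: hn; by exists h.
set a := zeta tau in hlt *.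
set c := `|a| ^+ 2 - eta in hlt *.
pose phi s := - ip a (u s) - c * s.
have phic : forall x, d < x -> {for x, continuous phi}.
  move=> x dx; apply: cvgB.
    apply: cvgN; apply: ip_cvg; [exact: cvg_cst | exact: u_cont dx].
  by apply: cvgM; [exact: cvg_cst | exact: cvg_id].
have phid : forall x h, 0 < h -> phi (x + h) - phi x = h * (ip a (- wq x h) - c).
  move=> x h h0'; rewrite /phi /wq ipNr ipZr ipBr mulrBr mulrN mulrA mulrV ?unitfE ?lt0r_neq0 //.
  rewrite mul1r; lra.
have step1 : forall x, tau < x -> x - tau < h0 ->
    \forall h \near 0^'+, phi (x + h) <= phi x.
  move=> x tx xh.
  have x0 : 0 < x := lt_trans tau0 tx.
  have hq : ip a (- wq x h) - c @[h --> 0^'+] --> ip a (zeta x) - c.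
    apply: cvgB; last exact: cvg_cst.
    apply: ip_cvg; first exact: cvg_cst.
    rewrite -[zeta x]opprK; apply: cvgN; exact: (zetaP x0).2.
  have hneg : ip a (zeta x) - c < 0.
    have := hlt (x - tau); rewrite subr_gt0 tx xh addrC subrK ipC => /(_ isT).
    lra.
  have := cvgr_lt _ hq _ hneg.
  move=> hnear; near=> h.
  have hpos : 0 < h by near: h; exact: nbhs_right_gt.
  have hQ : ip a (- wq x h) - c < 0 by near: h; exact: hnear.
  have := phid x h hpos.
  have : h * (ip a (- wq x h) - c) < 0 by rewrite pmulr_rlt0.
  lra.
have step2 : forall s s', tau < s -> s <= s' -> s' < tau + h0 -> phi s' <= phi s.
  move=> s s' ts ss' sh.
  apply: dini => //.
    move=> x /andP[sx _]; apply: phic; apply: lt_le_trans sx.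
    exact: lt_trans dtau ts.
  move=> x /andP[sx xs'] eps eps0 h1 h10.
  have hx : tau < x by apply: lt_le_trans sx.
  have hxh : x - tau < h0.
    have : x < tau + h0 by apply: lt_trans sh.
    lra.
  apply: near_right_ex => //.
  have := step1 x hx hxh => hnear.
  near=> h.
  have hpos : 0 < h by near: h; exact: nbhs_right_gt.
  have : phi (x + h) <= phi x by near: h; exact: hnear.
  have : 0 < eps * h by rewrite mulr_gt0.
  lra.
have step3 : forall s', tau < s' -> s' < tau + h0 -> phi s' <= phi tau.
  move=> s' ts' sh.
  apply: (@le_cont_right _ phi tau (s' - tau) (phi s')).
  - exact: phic.
  - by rewrite subr_gt0.
  move=> s /andP[s0 sk]; apply: step2 => //.
  + by rewrite ltrDl.
  + move: sk; lra.
have hq : ip a (- wq tau h) @[h --> 0^'+] --> ip a a.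
  apply: ip_cvg; first exact: cvg_cst.
  rewrite -[a in X in _ --> X]opprK; apply: cvgN; exact: (zetaP tau0).2.
have ca : c < ip a a by rewrite ipxx /c; lra.
have [h [/andP[hpos hh0] hc]] := near_right_ex _ (cvgr_gt _ hq _ ca) _ h00.
have := step3 (tau + h); rewrite ltrDl hpos ltrD2l hh0 => /(_ isT isT).
have := phid tau h hpos.
have : 0 < h * (ip a (- wq tau h) - c) by rewrite mulr_gt0 // subr_gt0.
lra.
Unshelve. all: by end_near.
Qed.

Definition Rq t := en t / gn t.

Lemma gnR {t} : 0 < t -> gn (t + h) @[h --> 0^'+] --> gn t.
Proof.
move=> t0; rewrite /gn.
have -> : (fun h => `|u (t + h)| ^+ 2) = (fun h => `|u (t + h)| * `|u (t + h)|).
  by apply/funext => h; rewrite expr2.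
by rewrite expr2; apply: cvgM; apply: cvg_norm; exact: uR.
Qed.

Lemma R_step {tau} : d < tau -> 0 < gn tau -> forall eps, 0 < eps -> forall h0, 0 < h0 ->
  exists h, 0 < h < h0 /\ Rq (tau + h) <= Rq tau + eps * h.
Proof.
move=> dtau Gpos eps eps0 h0 h00.
have tau0 : 0 < tau := lt_trans hd dtau.
have [P1 P2] := P_bounds tau0.
have E0 : 0 <= en tau := en_ge0 tau0.
set A := zeta tau in P1 P2 *.
set G := gn tau in Gpos *.
set E := en tau in P1 P2 E0 *.
set P := ip A (u tau) in P1 P2 *.
set Z2 := `|A| ^+ 2.
have key : 2 * E * P <= Z2 * G.
  have P0 : 0 <= P by lra.
  have k1 : 2 * E * P <= P * P by rewrite ler_wpM2r.
  have CS : P <= `|A| * `|u tau| by exact: ip_le.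
  have k2 : P * P <= (`|A| * `|u tau|) * (`|A| * `|u tau|) by rewrite ler_pM.
  have sq : Z2 * G = (`|A| * `|u tau|) * (`|A| * `|u tau|).
    by rewrite /Z2 /G /gn !expr2; ring.
  lra.
pose eta := eps * G / 2.
have eta0 : 0 < eta by rewrite /eta divr_gt0 // mulr_gt0.
pose F h := (- (Z2 - eta) + L * `|wq tau h + A|) * G
   - E * (h^-1 * (gn (tau + h) - G)) - eps * G * gn (tau + h).
have hF : F h @[h --> 0^'+] --> (- (Z2 - eta) + L * 0) * G - E * (- (2 * P)) - eps * G * G.
  apply: cvgB; first apply: cvgB.
  - apply: cvgM; last exact: cvg_cst.
    apply: cvgD; first exact: cvg_cst.
    apply: cvgM; first exact: cvg_cst.
    have hw : wq tau h + A @[h --> 0^'+] --> - A + A.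
      by apply: cvgD; [exact: (zetaP tau0).2 | exact: cvg_cst].
    rewrite addNr in hw.
    have hn : `|wq tau h + A| @[h --> 0^'+] --> `|0 : H| by apply: cvg_norm.
    by rewrite normr0 in hn.
  - apply: cvgM; first exact: cvg_cst.
    exact: gn_der.
  - apply: cvgM; first exact: cvg_cst.
    exact: gnR.
have F0 : (- (Z2 - eta) + L * 0) * G - E * (- (2 * P)) - eps * G * G < 0.
  have : eta * G = eps * G * G / 2 by rewrite /eta; field.
  have : 0 < eps * G * G by do 2 apply: mulr_gt0 => //.
  lra.
have hnear : \forall h \near 0^'+,
    Z2 - eta <= ip (zeta (tau + h)) A -> Rq (tau + h) <= Rq tau + eps * h.
  near=> h => hip2.
  have hpos : 0 < h by near: h; exact: nbhs_right_gt.
  have gpos : 0 < gn (tau + h) by near: h; exact: (cvgr_gt _ (gnR tau0) _ Gpos).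
  have hFn : F h < 0 by near: h; exact: (cvgr_lt _ hF _ F0).
  have dth : d <= tau + h by apply: ltW; apply: lt_le_trans dtau _; rewrite lerDl ltW.
  have eu := en_up (ltW dtau) hpos.
  set b := zeta (tau + h) in eu hip2.
  set w := wq tau h in eu hFn.
  set g' := gn (tau + h) in gpos hFn *.
  set e' := en (tau + h) in eu *.
  have hb : ip b (w + A) <= L * `|w + A|.
    apply: le_trans (ip_le _ _) _; rewrite ler_wpM2r //; exact: zeta_bound.
  have hbw : ip b w = ip b (w + A) - ip b A by rewrite ipDr; ring.
  have f1 : e' - E <= h * (- (Z2 - eta) + L * `|w + A|).
    apply: le_trans eu _; rewrite hbw; apply: ler_wpM2l; first exact: ltW.
    lra.
  have f2 : h * (h^-1 * (g' - G)) = g' - G by rewrite mulrA mulrV ?unitfE ?lt0r_neq0 // mul1r.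
  have f1' : (e' - E) * G <= h * (- (Z2 - eta) + L * `|w + A|) * G by apply: ler_wpM2r => //; exact: ltW.
  have f3 : h * F h < 0 by rewrite pmulr_rlt0.
  rewrite /F -/w -/g' in f3.
  have f2' : E * (h * (h^-1 * (g' - G))) = E * (g' - G) by rewrite f2.
  have goal1 : e' * G - E * g' <= eps * h * (G * g') by lra.
  rewrite /Rq -/e' -/E -/g' -/G.
  have -> : e' / g' = E / G + (e' * G - E * g') / (G * g').
    by field; apply/andP; split; apply: lt0r_neq0.
  by rewrite lerD2l ler_pdivrMr // mulr_gt0.
have [r r0 hr] := near_right_rad _ hnear.
have m0 : 0 < Num.min h0 r by rewrite lt_min h00 r0.
have [h [/andP[hpos hm] hh]] := limsup dtau eta eta0 (Num.min h0 r) m0.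
exists h; split; first by move: hm; rewrite lt_min => /andP[-> _]; rewrite hpos.
apply: hr => //; move: hm; rewrite lt_min => /andP[_ ->]; by rewrite hpos.
Unshelve. all: by end_near.
Qed.

Lemma Rq_cont {x} : d < x -> 0 < gn x -> {for x, continuous Rq}.
Proof.
move=> dx gx; apply: cvgM; first exact: en_cont.
by apply: cvgV; [exact: lt0r_neq0 | exact: gn_cont].
Qed.

Lemma R_decr {a t} : d < a -> a <= t -> (forall x, a <= x <= t -> 0 < gn x) ->
  Rq t <= Rq a.
Proof.
move=> da at' hg; apply: dini => //.
  move=> x hx; apply: Rq_cont; last exact: hg.
  by case/andP: hx => ax _; apply: lt_le_trans ax.
move=> x /andP[ax xt] eps eps0 h0 h00.
apply: R_step => //; first exact: lt_le_trans ax.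
by apply: hg; rewrite ax ltW.
Qed.

Lemma gn_decr {a t} : d < a -> a <= t -> gn t <= gn a.
Proof.
move=> da at'; apply: dini => //.
  move=> x /andP[ax _]; apply: gn_cont; exact: lt_le_trans ax.
move=> x /andP[ax _] eps eps0 h0 h00.
have x0 : 0 < x by apply: lt_le_trans ax; exact: lt_trans hd da.
have [P1 _] := P_bounds x0.
have E0 := en_ge0 x0.
have hl : - (2 * ip (zeta x) (u x)) < eps by lra.
apply: near_right_ex => //.
have := cvgr_lt _ (gn_der x0) _ hl => hn.
near=> h.
have hpos : 0 < h by near: h; exact: nbhs_right_gt.
have hq : h^-1 * (gn (x + h) - gn x) < eps by near: h; exact: hn.
have : gn (x + h) - gn x < eps * h.
  exact: mulinv_lt.
lra.
Unshelve. all: by end_near.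
Qed.

Lemma gn_lin {s T K} : d < s -> s <= T ->
  (forall x, s <= x < T -> 2 * ip (zeta x) (u x) <= K) -> gn s <= gn T + K * (T - s).
Proof.
move=> ds sT hK.
pose phi x := - (gn x + K * x).
suff : phi T <= phi s by rewrite /phi; lra.
apply: dini => //.
  move=> x /andP[sx _]; apply: cvgN; apply: cvgD.
    apply: gn_cont; exact: lt_le_trans sx.
  by apply: cvgM; [exact: cvg_cst | exact: cvg_id].
move=> x /andP[sx xT] eps eps0 h0 h00.
have x0 : 0 < x by apply: lt_le_trans sx; exact: lt_trans hd ds.
have hk : 2 * ip (zeta x) (u x) <= K by apply: hK; rewrite sx xT.
have hl : - K - eps < - (2 * ip (zeta x) (u x)) by lra.
apply: near_right_ex => //.
have := cvgr_gt _ (gn_der x0) _ hl => hn.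
near=> h.
have hpos : 0 < h by near: h; exact: nbhs_right_gt.
have hq : - K - eps < h^-1 * (gn (x + h) - gn x) by near: h; exact: hn.
have : (- K - eps) * h < gn (x + h) - gn x.
  exact: mulinv_gt.
rewrite /phi; lra.
Unshelve. all: by end_near.
Qed.

Lemma never_zero {del} : d < del -> u del != 0 -> forall t, del <= t -> u t != 0.
Proof.
move=> ddel ud t dt; apply/negP => /eqP ut.
have del0 : 0 < del := lt_trans hd ddel.
pose Z := [set s | del <= s /\ u s = 0].
have Zne : Z !=set0 by exists t.
have Zlb : lbound Z del by move=> s [].
have hZ : has_lbound Z by exists del.
pose T := inf Z.
have TZ : lbound Z T := ge_inf hZ.
have dT : del <= T := lb_le_inf Zne Zlb.
have gpos : forall x, del <= x -> x < T -> 0 < gn x.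
  move=> x dx xT; rewrite /gn exprn_gt0 // normr_gt0; apply/negP => /eqP ux.
  have := TZ x (conj dx ux); rewrite leNgt xT //.
have gT : gn T = 0.
  apply/eqP; rewrite eq_le; apply/andP; split; last by rewrite /gn exprn_ge0.
  rewrite leNgt; apply/negP => gT0.
  have : \forall y \near T, 0 < gn y.
    by apply: (cvgr_gt _ (gn_cont (lt_le_trans ddel dT)) _ gT0).
  move=> /near_ball_ex [r r0 Hr].
  have [z Zz zr] := inf_adherent r0 (conj Zne hZ).
  have Tz : T <= z := TZ z Zz.
  have : 0 < gn z.
    apply: Hr; rewrite distrC ger0_norm ?subr_ge0 //.
    by rewrite ltrBlDl.
  by case: Zz => _ uz; rewrite /gn uz normr0 expr0n /= ltxx.
have dT' : del < T.
  rewrite lt_neqAle dT andbT; apply/negP => /eqP eT.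
  have : gn del = 0 by rewrite eT.
  by rewrite /gn => /eqP; rewrite sqrf_eq0 normr_eq0 (negPf ud).
have g0 : 0 < gn del by apply: gpos.
pose R0 := Rq del.
have R00 : 0 <= R0 by rewrite /R0 /Rq divr_ge0 ?en_ge0 // ltW.
pose M := 2 `^ p - 1.
have M0 : 0 <= M.
  have p1 : 1 <= p by apply: le_trans hp; rewrite ler1n.
  have : 2 <= 2 `^ p by apply: le1r_powR => //; rewrite ler1n.
  rewrite /M; lra.
pose K0 := 2 * M * R0.
have K00 : 0 <= K0 by rewrite /K0; do 2 apply: mulr_ge0 => //.
pose s := Num.max del (T - (K0 + 1)^-1).
have ds : del <= s by rewrite /s le_max lexx.
have sT : s < T.
  rewrite /s gt_max dT' /=; rewrite ltrBlDr ltrDl invr_gt0; lra.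
have Ts : T - s <= (K0 + 1)^-1.
  have : T - (K0 + 1)^-1 <= s by rewrite /s le_max lexx orbT.
  lra.
have gs : 0 < gn s by apply: gpos.
have hK : forall x, s <= x < T -> 2 * ip (zeta x) (u x) <= K0 * gn s.
  move=> x /andP[sx xT].
  have dx : del <= x := le_trans ds sx.
  have x0 : 0 < x := lt_le_trans del0 dx.
  have gx : 0 < gn x by apply: gpos.
  have [_ P2] := P_bounds x0.
  have Rx : Rq x <= R0.
    apply: R_decr => // y /andP[dy yx]; apply: gpos => //; exact: le_lt_trans yx xT.
  have ex : en x = Rq x * gn x by rewrite /Rq divfK // lt0r_neq0.
  have e1 : en x <= R0 * gn x by rewrite ex ler_wpM2r // ltW.
  have gxs : gn x <= gn s by apply: gn_decr => //; exact: lt_le_trans ddel ds.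
  have e2 : R0 * gn x <= R0 * gn s by rewrite ler_wpM2l.
  have e3 : M * en x <= M * (R0 * gn s).
    by apply: ler_wpM2l => //; exact: le_trans e1 e2.
  have P2' : ip (zeta x) (u x) <= M * en x by exact: P2.
  rewrite /K0; lra.
have := gn_lin (lt_le_trans ddel ds) (ltW sT) hK.
rewrite gT add0r => hlin.
have : K0 * (T - s) < 1.
  have h1 : K0 * (T - s) <= K0 * (K0 + 1)^-1 by apply: ler_wpM2l.
  apply: le_lt_trans h1 _.
  rewrite ltr_pdivrMr; lra.
move=> hk.
have : K0 * gn s * (T - s) < gn s.
  by rewrite mulrAC -[X in _ < X]mul1r ltr_pM2r.
lra.
Qed.
End Main.

Theorem theorem1 (R : realType) (H : completeNormedModType R)
    (ip : H -> H -> R) (p : R) (J : H -> \bar R) (f : H) (u : R -> H) :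
  is_inner_product ip ->
  2 <= p ->
  convex_fun J ->
  lower_semicontinuous J ->
  proper_fun J ->
  dense_eff_dom J ->
  abs_homogeneous p J ->
  (0 < lambda1 ip p J)%E ->
  H0 ip J f ->
  gradient_flow ip J f u ->
  extinction_time u = +oo%E.
Proof.
move=> hip hp hconv _ hprop _ hhom _ [_ f0] [u0 hcont hlip hder].
have hder' : forall t, 0 < t -> exists z, subdiff ip J (u t) z /\
    h^-1 *: (u (t + h) - u t) @[h --> 0^'+] --> - z.
  move=> t t0; have [z [[hz _] hc]] := hder t t0; by exists z.
have A0 : [set t : R | 0 <= t] 0 by rewrite /= lexx.
have hc0 : u x @[x --> within [set t : R | 0 <= t] (nbhs 0)] --> u 0.
  move: hcont; rewrite continuous_subspace_in => /(_ 0 (mem_set A0)).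
  by move=> h; rewrite (nbhs_subspace_in A0); exact: h.
have fpos : 0 < `|f| by rewrite normr_gt0.
have hw : \forall y \near within [set t : R | 0 <= t] (nbhs 0), `|u 0 - u y| < `|f|.
  by move/cvgrPdist_lt: hc0; apply.
have hr : \forall y \near (0:R)^'+, `|u 0 - u y| < `|f|.
  move: hw; rewrite !near_withinE; apply: filterS => y hy y0; apply: hy.
  exact: ltW.
have [del [/andP[del0 _] hdel]] := near_right_ex _ hr _ ltr01.
have udel : u del != 0.
  apply/negP => /eqP ud; move: hdel; rewrite ud subr0 u0 ltxx //.
pose d := del / 2.
have d0 : 0 < d by rewrite divr_gt0.
have ddel : d < del by rewrite /d ltr_pdivrMr // mulr_natr mulr2n ltrDl.
have [L hL] := hlip d d0.
have nz := @never_zero R H ip p J u hip hp hconv hprop hhom hder' d L d0 hL del ddel udel.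
rewrite /extinction_time.
have -> : [set T : R | 0 < T /\ (forall t : R, T <= t -> u t = 0)] = set0.
  apply/seteqP; split => // T [T0 hT].
  have hm : T <= Num.max T del by rewrite le_max lexx.
  have := hT _ hm; apply/eqP; apply: nz.
  by rewrite le_max lexx orbT.
by rewrite image_set0 ereal_inf0.
Qed.
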